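(* Every centrality has ties on every graph that is not rigid. Moreover, there exists a centrality $f$ such that for every rigid graph $G$, $f$ has no ties on $G$.
   Context: A graph $G=(V_G,E_G)$ is a finite directed graph with node set $V_G=\{0,1,\dots,n-1\}$ and arc set $E_G\subseteq V_G\times V_G$; write $x\to y$ for $(x,y)\in E_G$. An isomorphism $\varphi:G\to H$ is a bijection $V_G\to V_H$ such that $x\to_G y$ iff $\varphi(x)\to_H\varphi(y)$; an automorphism is an isomorphism $G\to G$. A graph is rigid if its only automorphism is the identity. A centrality $f$ is a function associating with each graph $G$ a map $f_G:V_G\to\mathbb{R}$ such that whenever $\varphi:G\to H$ is an isomorphism, $f_G(x)=f_H(\varphi(x))$ for all $x\in V_G$ (values may be negative). A centrality $f$ has no ties on $G$ if $f_G(x)\neq f_G(y)$ for all distinct $x,y\in V_G$; otherwise it has ties on $G$. *)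

(* Defs.v *)
From mathcomp Require Import all_boot.
From Stdlib Require Import Reals.
Unset Printing Implicit Defensive.

Record graph := Graph { nv : nat; arcs : {set 'I_nv * 'I_nv} }.

Definition arc (G : graph) (x y : 'I_(nv G)) : bool := (x, y) \in arcs G.

Definition is_iso (G H : graph) (phi : 'I_(nv G) -> 'I_(nv H)) : Prop :=
  bijective phi /\ forall x y, arc G x y = arc H (phi x) (phi y).

Definition rigid (G : graph) : Prop :=
  forall phi : 'I_(nv G) -> 'I_(nv G), is_iso G G phi -> forall x, phi x = x.

Definition centrality (f : forall G : graph, 'I_(nv G) -> R) : Prop :=
  forall (G H : graph) (phi : 'I_(nv G) -> 'I_(nv H)),
    is_iso G H phi -> forall x, f G x = f H (phi x).

Definition no_ties (f : forall G : graph, 'I_(nv G) -> R) (G : graph) : Prop :=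
  forall x y : 'I_(nv G), x <> y -> f G x <> f G y.

Definition has_ties (f : forall G : graph, 'I_(nv G) -> R) (G : graph) : Prop :=
  ~ no_ties f G.

(* Main.v *)
Require Import Defs.
From mathcomp Require Import all_boot.
From Stdlib Require Import Reals.
From Stdlib Require Import ClassicalEpsilon.

Set Implicit Arguments.
Definition key := (seq nat * seq (nat * nat))%type.

Definition Pk (G : graph) (x : 'I_(nv G)) (k : key) : Prop :=
  exists s : 'I_(nv G) -> nat, injective s /\ s x = 0%N /\
    (forall a, a \in k.1 <-> exists i, s i = a) /\
    (forall a b, (a, b) \in k.2 <-> exists i j, Defs.arc G i j /\ s i = a /\ s j = b).

Definition Pb G x (k : key) : bool :=
  if excluded_middle_informative (Pk G x k) then true else false.

Lemma PbP G x k : Pb G x k <-> Pk G x k.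
Proof. rewrite /Pb; case: excluded_middle_informative => //. Qed.

Lemma Pk_ex G x : exists k, Pk G x k.
Proof.
pose s := fun i : 'I_(nv G) => if i == x then 0%N else (nat_of_ord i).+1.
have sinj : injective s.
  move=> i j; rewrite /s.
  case: eqVneq => [->|_]; case: eqVneq => [->|_] //= [] /val_inj //.
exists ([seq s i | i <- enum 'I_(nv G)],
        [seq (s p.1, s p.2) | p <- enum (arcs G)]).
exists s; split => //; split; first by rewrite /s eqxx.
split.
- move=> a /=; split.
  + by case/mapP => i _ ->; exists i.
  + by case=> i <-; apply: map_f; rewrite mem_enum.
- move=> a b /=; split.
  + case/mapP => [[i j]] /=; rewrite mem_enum => Hij [-> ->].
    by exists i, j.
  + case=> i [j [Hij [<- <-]]].
    by apply: (map_f (fun p => (s p.1, s p.2)) (x := (i, j))); rewrite mem_enum.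
Qed.

Lemma Pb_ex G x : exists k, Pb G x k.
Proof. case: (Pk_ex G x) => k Hk; exists k; exact/PbP. Qed.

Definition code G x : key := xchoose (Pb_ex G x).

Definition fc (G : graph) (x : 'I_(nv G)) : R := INR (pickle (code G x)).

Lemma iso_inv G H phi : is_iso G H phi ->
  exists g, is_iso H G g /\ cancel phi g /\ cancel g phi.
Proof.
case=> [[g c1 c2] Ha]; exists g; split; last by [].
split; first by exists phi.
by move=> a b; rewrite Ha !c2.
Qed.

Lemma Pk_iso (G H : graph) phi x k : is_iso G H phi -> Pk G x k -> Pk H (phi x) k.
Proof.
move=> Hiso; case: (iso_inv Hiso) => g [_ [c1 c2]].
case: Hiso => _ Ha.
case=> s [sinj [sx [H1 H2]]].
exists (fun j => s (g j)); split.
  by move=> a b /sinj /(can_inj c2).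
split; first by rewrite c1.
split.
- move=> a; rewrite H1; split.
  + by case=> i <-; exists (phi i); rewrite c1.
  + by case=> j <-; exists (g j).
- move=> a b; rewrite H2; split.
  + case=> i [j [Hij [<- <-]]]; exists (phi i), (phi j).
    by rewrite !c1 -Ha.
  + case=> i [j [Hij [<- <-]]]; exists (g i), (g j).
    by rewrite Ha !c2.
Qed.

Lemma fc_centrality : centrality fc.
Proof.
move=> G H phi Hiso x; rewrite /fc /code; congr (INR (pickle _)).
apply: eq_xchoose => k.
case: (iso_inv Hiso) => g [Hg [c1 c2]].
apply/idP/idP => /PbP Hk; apply/PbP.
- exact: (Pk_iso Hiso Hk).
- have := Pk_iso Hg Hk; by rewrite c1.
Qed.

Lemma fc_noties G : rigid G -> no_ties fc G.
Proof.
move=> Hr x y Hxy Heq; apply: Hxy.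
move/INR_eq: Heq => /(pcan_inj pickleK_inv) Hc.
have Hx := xchooseP (Pb_ex G x); have Hy := xchooseP (Pb_ex G y).
rewrite -/(code G x) in Hx; rewrite -/(code G y) -Hc in Hy.
move/PbP: Hx => [s [sinj [sx [S1 S2]]]].
move/PbP: Hy => [t [tinj [ty [T1 T2]]]].
set k := code G x in S1 S2 T1 T2.
have ex1 : forall i, exists j, t j = s i.
  by move=> i; apply/T1/S1; exists i.
have ex2 : forall j, exists i, s i = t j.
  by move=> j; apply/S1/T1; exists j.
pose phi := fun i => odflt i [pick j | t j == s i].
pose psi := fun j => odflt j [pick i | s i == t j].
have Hphi : forall i, t (phi i) = s i.
  move=> i; rewrite /phi; case: pickP => [j /eqP //|H].
  by case: (ex1 i) => j Hj; move: (H j); rewrite Hj eqxx.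
have Hpsi : forall j, s (psi j) = t j.
  move=> j; rewrite /psi; case: pickP => [i /eqP //|H].
  by case: (ex2 j) => i Hi; move: (H i); rewrite Hi eqxx.
have Hiso : is_iso G G phi.
  split.
    exists psi => i; first by apply: sinj; rewrite Hpsi Hphi.
    by apply: tinj; rewrite Hphi Hpsi.
  move=> i j; apply/idP/idP => Ha.
  - have : (s i, s j) \in k.2 by apply/S2; exists i, j.
    move/T2 => [i' [j' [Ha' [E1 E2]]]].
    have -> : phi i = i' by apply: tinj; rewrite Hphi.
    have -> : phi j = j' by apply: tinj; rewrite Hphi.
    done.
  - have : (t (phi i), t (phi j)) \in k.2 by apply/T2; exists (phi i), (phi j).
    rewrite !Hphi.
    move/S2 => [i' [j' [Ha' [E1 E2]]]].
    by rewrite -(sinj _ _ E1) -(sinj _ _ E2).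
have := Hr phi Hiso x.
have -> : phi x = y by apply: tinj; rewrite Hphi sx ty.
by [].
Qed.

Theorem theorem1 :
  (forall f : forall G : graph, 'I_(nv G) -> R,
      centrality f -> forall G : graph, ~ rigid G -> has_ties f G) /\
  (exists f : forall G : graph, 'I_(nv G) -> R,
      centrality f /\ forall G : graph, rigid G -> no_ties f G).
Proof.
split.
- move=> f Hf G Hnr Hnt; apply: Hnr => phi Hiso x.
  case: (eqVneq (phi x) x) => // Hne.
  exfalso; apply: (Hnt (phi x) x); [exact/eqP | symmetry; exact: Hf Hiso x].
- exists fc; split; [exact: fc_centrality | exact: fc_noties].
Qed.
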